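(* Each of the following ten sets of four generalized Bell states in $\mathbb{C}^4\otimes\mathbb{C}^4$ is perfectly distinguishable by one-way LOCC using only projective measurements: $\{\ket{\psi_{00}}\}\cup T$ with $T$ one of $\{\ket{\psi_{01}},\ket{\psi_{10}},\ket{\psi_{11}}\}$, $\{\ket{\psi_{01}},\ket{\psi_{10}},\ket{\psi_{30}}\}$, $\{\ket{\psi_{01}},\ket{\psi_{10}},\ket{\psi_{32}}\}$, $\{\ket{\psi_{01}},\ket{\psi_{11}},\ket{\psi_{12}}\}$, $\{\ket{\psi_{01}},\ket{\psi_{11}},\ket{\psi_{31}}\}$, $\{\ket{\psi_{01}},\ket{\psi_{11}},\ket{\psi_{33}}\}$, $\{\ket{\psi_{01}},\ket{\psi_{12}},\ket{\psi_{30}}\}$, $\{\ket{\psi_{01}},\ket{\psi_{12}},\ket{\psi_{32}}\}$, $\{\ket{\psi_{01}},\ket{\psi_{13}},\ket{\psi_{31}}\}$, $\{\ket{\psi_{01}},\ket{\psi_{13}},\ket{\psi_{33}}\}$.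
   Context: Generalized Bell states in $\mathbb{C}^4\otimes\mathbb{C}^4$ (Alice holds the first factor, Bob the second): $\ket{\psi_{nm}}=\frac12\sum_{j=0}^{3}e^{2\pi i jn/4}\ket{j}_A\ket{j\oplus_4 m}_B$ for $n,m\in\{0,1,2,3\}$, where $j\oplus_4 m=(j+m)\bmod 4$. Perfect distinguishability by one-way LOCC using only projective measurements means: one party performs a projective measurement on her subsystem, communicates the outcome classically, and the other party then performs a projective measurement (depending on that outcome) whose result identifies with certainty which state of the set was shared. *)

(* Defs.v *)
From mathcomp Require Import all_boot all_order all_algebra all_field.
Set Implicit Arguments. Unset Strict Implicit. Unset Printing Implicit Defensive.
Import Order.TTheory GRing.Theory Num.Theory.
Local Open Scope ring_scope.

Definition adjmx (A : 'M[algC]_4) : 'M[algC]_4 := (map_mx (fun x => x^*) A)^T.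

Definition projector (A : 'M[algC]_4) : Prop := adjmx A = A /\ A *m A = A.

Definition proj_meas (m : nat) (P : 'I_m -> 'M[algC]_4) : Prop :=
  (forall a, projector (P a)) /\ \sum_(a < m) P a = 1%:M.

(* A vector of C^4 (x) C^4 is given by its coefficient matrix:
   |psi> = sum_{i,j} psi i j |i>_A |j>_B.
   prob psi A B = <psi| (A (x) B) |psi>, A acting on Alice, B on Bob. *)
Definition prob (psi A B : 'M[algC]_4) : algC :=
  \sum_(i < 4) \sum_(j < 4) \sum_(k < 4) \sum_(l < 4)
     (psi i j)^* * A i k * B j l * psi k l.

(* Generalized Bell state |psi_{nm}> = 1/2 sum_j i^(jn) |j>|j+m mod 4>,
   since e^{2 pi i/4} = 'i. *)
Definition bell (n m : nat) : 'M[algC]_4 :=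
  \matrix_(i < 4, j < 4)
     (if (j : nat) == ((i + m) %% 4)%N then 2^-1 * 'i ^+ (i * n) else 0).

(* One-way LOCC, projective only, first party measures (P a), communicates a,
   second party measures (Q a b); guess g a b must equal the true index k
   whenever outcome (a,b) has nonzero probability on state S k. *)
Definition alice_first_distinguishable (I : finType) (S : I -> 'M[algC]_4) : Prop :=
  exists (m n : nat) (P : 'I_m -> 'M[algC]_4) (Q : 'I_m -> 'I_n -> 'M[algC]_4)
         (g : 'I_m -> 'I_n -> I),
    [/\ proj_meas P, (forall a, proj_meas (Q a)) &
        forall k a b, prob (S k) (P a) (Q a b) != 0 -> g a b = k].

Definition bob_first_distinguishable (I : finType) (S : I -> 'M[algC]_4) : Prop :=
  exists (m n : nat) (P : 'I_m -> 'M[algC]_4) (Q : 'I_m -> 'I_n -> 'M[algC]_4)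
         (g : 'I_m -> 'I_n -> I),
    [/\ proj_meas P, (forall a, proj_meas (Q a)) &
        forall k a b, prob (S k) (Q a b) (P a) != 0 -> g a b = k].

Definition one_way_proj_distinguishable (I : finType) (S : I -> 'M[algC]_4) : Prop :=
  alice_first_distinguishable S \/ bob_first_distinguishable S.

Definition bell_set (s : seq (nat * nat)) (k : 'I_4) : 'M[algC]_4 :=
  bell (nth (0, 0) s k).1 (nth (0, 0) s k).2.

Definition theorem6_sets : seq (seq (nat * nat)) :=
  [:: [:: (0,0); (0,1); (1,0); (1,1)];
      [:: (0,0); (0,1); (1,0); (3,0)];
      [:: (0,0); (0,1); (1,0); (3,2)];
      [:: (0,0); (0,1); (1,1); (1,2)];
      [:: (0,0); (0,1); (1,1); (3,1)];
      [:: (0,0); (0,1); (1,1); (3,3)];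
      [:: (0,0); (0,1); (1,2); (3,0)];
      [:: (0,0); (0,1); (1,2); (3,2)];
      [:: (0,0); (0,1); (1,3); (3,1)];
      [:: (0,0); (0,1); (1,3); (3,3)]]%N.

(* Main.v *)
Require Import Defs.
From mathcomp Require Import all_boot all_order all_algebra all_field.
From mathcomp Require Import ring.
Import Order.TTheory GRing.Theory Num.Theory.
Local Open Scope ring_scope.

Definition ip (r : nat) : int * int :=
  match (r %% 4)%N with 0 => (1, 0) | 1 => (0, 1) | 2 => (-1, 0) | _ => (0, -1) end%R.

Definition emb (z : int * int) : algC := z.1%:~R + z.2%:~R * 'i.

Fixpoint gsum (s : seq nat) : int * int :=
  match s with
  | [::] => (0, 0)%R
  | x :: s' => ((ip x).1 + (gsum s').1, (ip x).2 + (gsum s').2)%R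
  end.

Lemma i4 : ('i : algC) ^+ 4 = 1.
Proof. by rewrite (exprM _ 2 2) sqrCi expr2 mulrNN mulr1. Qed.

Lemma ipE r : ('i : algC) ^+ r = emb (ip r).
Proof.
rewrite {1}(divn_eq r 4) exprD mulnC exprM i4 expr1n mul1r /emb /ip.
have : (r %% 4 < 4)%N by rewrite ltn_mod.
case: (r %% 4)%N => [|[|[|[|k]]]] //= _.
- by rewrite mul0r addr0.
- by rewrite mul1r add0r expr1.
- by rewrite sqrCi mul0r addr0.
- rewrite exprS sqrCi mulrN1 add0r; ring.
Qed.

Lemma gsumE s : \sum_(x <- s) ('i : algC) ^+ x = emb (gsum s).
Proof.
elim: s => [|x s IH]; first by rewrite big_nil /emb /= mul0r addr0.
by rewrite big_cons IH ipE /emb /= !intrD; ring.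
Qed.

Lemma sum4E (f : nat -> nat) :
  \sum_(k < 4) ('i : algC) ^+ (f k) = emb (gsum [seq f k | k <- iota 0 4]).
Proof. by rewrite -gsumE big_map -(big_mkord xpredT (fun k => ('i : algC) ^+ f k)). Qed.

Definition Et : seq (seq nat) :=
  [:: [:: 0; 0; 2; 2]; [:: 0; 2; 2; 0]; [:: 0; 1; 0; 1]; [:: 0; 3; 0; 3]]%N.
Definition E (a k : nat) : nat := nth 0%N (nth [::] Et a) k.

Definition w (a k : nat) : algC := 'i ^+ (E a k).

Lemma conjiX e : (('i : algC) ^+ e)^* = (- 'i) ^+ e.
Proof.
elim: e => [|e IH]; first by rewrite !expr0 conjC1.
by rewrite exprS rmorphM /= IH conjCi exprS.
Qed.

Lemma conjw a k : (w a k)^* = 'i ^+ (3 * E a k).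
Proof.
rewrite /w conjiX exprM; congr (_ ^+ _).
by rewrite exprS sqrCi mulrN1.
Qed.

Lemma normw a k : w a k * (w a k)^* = 1.
Proof. by rewrite conjw /w -exprD -[(E a k + _)%N]/(4 * E a k)%N exprM i4 expr1n. Qed.

Definition Pm (a : 'I_4) : 'M[algC]_4 :=
  \matrix_(i < 4, j < 4) (4%:R^-1 * (w a i * (w a j)^*)).

Lemma four_neq0 : (4%:R : algC) != 0. Proof. by rewrite pnatr_eq0. Qed.

Lemma conj4 : ((4%:R : algC)^-1)^* = 4%:R^-1.
Proof. by apply: geC0_conj; rewrite invr_ge0 ler0n. Qed.

Lemma Pm_proj a : projector (Pm a).
Proof.
split.
  apply/matrixP => i j; rewrite !mxE !rmorphM /= conjCK conj4; ring.
apply/matrixP => i j; rewrite !mxE.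
rewrite (eq_bigr (fun _ => 4%:R^-1 * 4%:R^-1 * (w a i * (w a j)^*))) => [|k _].
  by rewrite sumr_const card_ord -mulr_natr; field.
rewrite /Pm !mxE -[RHS]mulr1 -(normw a k); ring.
Qed.

Definition gsI (i j : nat) := gsum [seq (E a i + 3 * E a j)%N | a <- iota 0 4].

Lemma gsI_val (i j : 'I_4) : gsI i j = if i == j then (4, 0)%R else (0, 0)%R.
Proof.
by case: i => [[|[|[|[|?]]]] Hi] //; case: j => [[|[|[|[|?]]]] Hj].
Qed.

Lemma Pm_meas : proj_meas Pm.
Proof.
split; first exact: Pm_proj.
apply/matrixP => i j; rewrite summxE !mxE.
under eq_bigr do rewrite !mxE conjw -exprD.
rewrite -mulr_sumr (sum4E (fun a => E a i + 3 * E a j)%N) -/(gsI i j) gsI_val.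
case: (i == j); rewrite /emb /=.
  by rewrite mul0r addr0; field.
by rewrite mul0r addr0 mulr0.
Qed.

Definition amp (psi : 'M[algC]_4) (a b : 'I_4) : algC :=
  \sum_(k < 4) \sum_(l < 4) (w a k)^* * (w b l)^* * psi k l.

Lemma prob0 psi a b : amp psi a b = 0 -> prob psi (Pm a) (Pm b) = 0.
Proof.
move=> H0; rewrite /prob.
have H : forall i j : 'I_4,
  \sum_(k < 4) \sum_(l < 4) (psi i j)^* * Pm a i k * Pm b j l * psi k l =
  ((psi i j)^* * 4%:R^-1 * 4%:R^-1 * w a i * w b j) * amp psi a b.
  move=> i j; rewrite /amp mulr_sumr; apply: eq_bigr => k _.
  rewrite mulr_sumr; apply: eq_bigr => l _; rewrite !mxE; ring.
apply: big1 => i _; apply: big1 => j _; by rewrite H H0 mulr0.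
Qed.

Definition ex (n m : nat) (a b k : nat) : nat :=
  (3 * E a k + 3 * E b ((k + m) %% 4) + k * n)%N.

Lemma ampE n m (a b : 'I_4) :
  amp (bell n m) a b = 2^-1 * \sum_(k < 4) 'i ^+ (ex n m a b k).
Proof.
rewrite /amp mulr_sumr; apply: eq_bigr => k _.
rewrite (bigD1 (Ordinal (ltn_pmod (k + m) (isT : (0 < 4)%N)))) //=.
rewrite big1 ?addr0 => [|l Hl].
  rewrite !mxE /= eqxx !conjw /ex !exprD; ring.
rewrite !mxE; case: eqP => [El|]; last by rewrite mulr0.
by move: Hl; rewrite -(inj_eq val_inj) /= El eqxx.
Qed.

Definition zeroamp (s : seq (nat * nat)) (k a b : nat) : bool :=
  gsum [seq ex (nth (0, 0) s k).1 (nth (0, 0) s k).2 a b j | j <- iota 0 4]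
  == (0, 0)%R.

Definition guessn (s : seq (nat * nat)) (a b : nat) : nat :=
  find (fun k => ~~ zeroamp s k a b) (iota 0 4).

Definition guess (s : seq (nat * nat)) (a b : 'I_4) : 'I_4 :=
  inord (guessn s a b).

Definition check (s : seq (nat * nat)) : bool :=
  all (fun a => all (fun b => all (fun k =>
    zeroamp s k a b || (guessn s a b == k)) (iota 0 4)) (iota 0 4)) (iota 0 4).

Lemma main s : check s -> one_way_proj_distinguishable (bell_set s).
Proof.
move=> Hc; left; exists 4%N, 4%N, Pm, (fun _ => Pm), (guess s).
split; [exact: Pm_meas | by move=> _; exact: Pm_meas |].
move=> k a b Hp.
have Ha : (a : nat) \in iota 0 4 by rewrite mem_iota /=.
have Hb : (b : nat) \in iota 0 4 by rewrite mem_iota /=.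
have Hk : (k : nat) \in iota 0 4 by rewrite mem_iota /=.
move/allP/(_ _ Ha)/allP/(_ _ Hb)/allP/(_ _ Hk): Hc => /orP [Hz | /eqP Hg].
  exfalso; move/eqP: Hp; apply; apply: prob0.
  rewrite /bell_set ampE sum4E.
  by move/eqP: Hz => Hz; rewrite Hz /emb /= mul0r addr0 mulr0.
apply: val_inj; rewrite /guess Hg /= inordK //.
Qed.

Lemma check_all : all check theorem6_sets.
Proof. by vm_compute. Qed.

Theorem theorem6 :
  forall s, s \in theorem6_sets -> one_way_proj_distinguishable (bell_set s).
Proof. by move=> s Hs; apply: main; move/allP: check_all; apply. Qed.
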